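(* For all $f,g\in I\cdot\mathrm{Mult}[[B]]=\{I\cdot F: F\in\mathrm{Mult}[[B]]\}$, $$f\boxtimes g=(f\boxtimes_1 g)\cdot(f\boxtimes_2 g),\qquad g\,\underline\boxtimes\,f=(f\boxtimes_2 g)\cdot(f\boxtimes_1 g).$$
   Context: $B$ is a unital algebra over a field $\mathbb K$ of characteristic zero. $\mathrm{Mult}[[B]]$: sequences $f=(f_n)_{n\ge0}$ of multilinear maps $f_n:B^n\to B$. Product $(f\cdot g)_n(x_1,\dots,x_n)=\sum_{k=0}^n f_k(x_1,\dots,x_k)g_{n-k}(x_{k+1},\dots,x_n)$; $I=(\delta_{n,1}\mathrm{id}_B)$, so $(I\cdot F)_n(x_1,\dots,x_n)=x_1F_{n-1}(x_2,\dots,x_n)$, $(I\cdot F)_0=0$. Planar binary trees: $Y_0=\{|\}$, $Y_n=\{\sigma\vee\tau:\sigma\in Y_k,\tau\in Y_l,k+l=n-1\}$ ($\sigma\vee\tau$: root with left subtree $\sigma$, right subtree $\tau$); each $\tau\in Y_n$, $n\ge1$, is uniquely $\tau_1\vee(\tau_2\vee(\cdots\vee(\tau_k\vee|)))$; $j_i=|\tau_1|+\dots+|\tau_i|+i$. For $f,g\in\mathrm{Mult}[[B]]$: $(f\cup g)_|=1$, $(f\cup g)_\tau(x_1,\dots,x_n)=g_k((g\cup f)_{\tau_1}(x_1,\dots,x_{j_1-1})x_{j_1},\dots,(g\cup f)_{\tau_k}(x_{j_{k-1}+1},\dots,x_{j_k-1})x_{j_k})$. $R:Y\to Y$: $R(|)=|$,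 $R(\sigma\vee\tau)=(|\vee R(\sigma))\vee R(\tau)$. Boxed convolutions (for $n\ge1$): $(f\boxtimes g)_n(x_1,\dots,x_n)=\sum_{\tau\in Y_n}(f\cup g)_{R(\tau)}(x_1,1,x_2,1,\dots,x_n,1)$, $(f\boxtimes g)_0=g_0$; $(f\underline\boxtimes g)_n(x_1,\dots,x_n)=\sum_{\tau\in Y_n}(f\cup g)_{R(\tau)}(1,x_1,1,x_2,\dots,1,x_n)$, $(f\underline\boxtimes g)_0=g_0$; $(f\boxtimes_1 g)_n(x_1,\dots,x_n)=\sum_{\tau\in Y_{n-1}}(g\cup f)_{|\vee R(\tau)}(x_1,1,x_2,1,\dots,1,x_n)$, $(f\boxtimes_1 g)_0=0$; $(f\boxtimes_2 g)_n(x_1,\dots,x_n)=\sum_{\tau\in Y_n}(f\cup g)_{|\vee R(\tau)}(1,x_1,1,x_2,\dots,1,x_n,1)$, $(f\boxtimes_2 g)_0=g_1(1)$. *)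

(* Defs.v *)
From mathcomp Require Import all_boot all_order all_algebra.
Set Implicit Arguments. Unset Strict Implicit. Unset Printing Implicit Defensive.
Import GRing.Theory.
Local Open Scope ring_scope.

(* An element f = (f_n)_n of Mult[[B]] is encoded as a single function
   f : seq B -> B, with f_n(x_1,...,x_n) := f [:: x_1; ...; x_n]
   (the arity n is the length of the input list). *)

Section Mult.
Variables (K : fieldType) (B : algType K).

Definition multilinear (f : seq B -> B) : Prop :=
  forall (l r : seq B) (c : K) (x y : B),
    f (l ++ (c *: x + y) :: r) = c *: f (l ++ x :: r) + f (l ++ y :: r).

Definition multM (f g : seq B -> B) : seq B -> B :=
  fun s => \sum_(k < (size s).+1) f (take k s) * g (drop k s).

Definition multI : seq B -> B :=
  fun s => if s is [:: x] then x else 0.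

Definition inIMult (f : seq B -> B) : Prop :=
  exists F, multilinear F /\ f = multM multI F.

End Mult.

Inductive tree := Leaf | Node of tree & tree.

Fixpoint tsize (t : tree) : nat :=
  match t with Leaf => 0 | Node l r => (tsize l + tsize r).+1 end.

Fixpoint Ys (n : nat) : seq (seq tree) :=
  match n with
  | 0 => [:: [:: Leaf]]
  | m.+1 => let L := Ys m in
      rcons L (flatten [seq [seq Node s t | s <- nth [::] L k, t <- nth [::] L (m - k)]
                       | k <- iota 0 m.+1])
  end.

(* Y_n : the list of planar binary trees with n internal vertices *)
Definition Y (n : nat) : seq tree := nth [::] (Ys n) n.

Fixpoint Rt (t : tree) : tree :=
  match t with Leaf => Leaf | Node s t => Node (Node Leaf (Rt s)) (Rt t) end.

Section Cup.
Variables (K : fieldType) (B : algType K).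

(* (f cup g)_tau ; for tau = tau_1 v (tau_2 v (... v (tau_k v |))) :
   (f cup g)_tau(x) = g_k((g cup f)_{tau_1}(block_1) x_{j_1}, ...,
                          (g cup f)_{tau_k}(block_k) x_{j_k}) *)
Fixpoint cup (f g : seq B -> B) (t : tree) (s : seq B) {struct t} : B :=
  match t with
  | Leaf => 1
  | Node l r =>
      g (cup g f l (take (tsize l) s) * nth 0 s (tsize l)
         :: (fix args (u : tree) (s' : seq B) {struct u} : seq B :=
               match u with
               | Leaf => [::]
               | Node l' r' =>
                   cup g f l' (take (tsize l') s') * nth 0 s' (tsize l')
                   :: args r' (drop (tsize l').+1 s')
               end) r (drop (tsize l).+1 s))
  end.

Definition inter_r (x : seq B) : seq B := flatten [seq [:: xi; 1] | xi <- x].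
Definition inter_l (x : seq B) : seq B := flatten [seq [:: 1; xi] | xi <- x].

Definition boxtimes (f g : seq B -> B) : seq B -> B :=
  fun x => if x is [::] then g [::] else
    \sum_(t <- Y (size x)) cup f g (Rt t) (inter_r x).

Definition uboxtimes (f g : seq B -> B) : seq B -> B :=
  fun x => if x is [::] then g [::] else
    \sum_(t <- Y (size x)) cup f g (Rt t) (inter_l x).

Definition boxtimes1 (f g : seq B -> B) : seq B -> B :=
  fun x => if x is x1 :: x' then
    \sum_(t <- Y (size x).-1) cup g f (Node Leaf (Rt t)) (x1 :: inter_l x')
  else 0.

Definition boxtimes2 (f g : seq B -> B) : seq B -> B :=
  fun x => if x is [::] then g [:: 1] else
    \sum_(t <- Y (size x)) cup f g (Node Leaf (Rt t)) (rcons (inter_l x) 1).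

End Cup.

(* Main.v *)
Require Import Defs.
From mathcomp Require Import all_boot all_order all_algebra.
From Stdlib Require Import FunctionalExtensionality.
Set Implicit Arguments. Unset Strict Implicit. Unset Printing Implicit Defensive.
Import GRing.Theory.
Local Open Scope ring_scope.

Lemma Ys_size n : size (Ys n) = n.+1.
Proof. by elim: n => //= n IH; rewrite size_rcons IH. Qed.

Lemma Ys_nth n k : (k <= n)%N -> nth [::] (Ys n) k = Y k.
Proof.
elim: n k => [|n IH] k; first by rewrite leqn0 => /eqP ->.
rewrite leq_eqVlt => /orP [/eqP ->|hk]; first by [].
by rewrite /= nth_rcons Ys_size hk IH.
Qed.

Lemma Ys_S n : Ys n.+1 = rcons (Ys n) (flatten [seq [seq Node s t | s <- nth [::] (Ys n) k, t <- nth [::] (Ys n) (n - k)]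
                       | k <- iota 0 n.+1]).
Proof. by []. Qed.

Lemma Y_succ n : Y n.+1 = flatten [seq [seq Node s t | s <- Y k, t <- Y (n - k)]
                       | k <- iota 0 n.+1].
Proof.
rewrite {1}/Y Ys_S nth_rcons Ys_size ltnn eqxx.
congr flatten; apply/eq_in_map => k; rewrite mem_iota add0n ltnS => hk.
by rewrite !Ys_nth // leq_subr.
Qed.

Lemma sumY_succ (R : nmodType) n (F : tree -> R) :
  \sum_(t <- Y n.+1) F t = \sum_(k < n.+1) \sum_(s <- Y k) \sum_(t <- Y (n - k)) F (Node s t).
Proof.
rewrite Y_succ big_flatten big_map -[in RHS](big_mkord xpredT (fun k => \sum_(s <- Y k) \sum_(t <- Y (n - k)) F (Node s t))) /index_iota subn0.
by apply: eq_bigr => k _; rewrite big_allpairs_dep.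
Qed.

Lemma all_flattenE (T : Type) (P : pred T) (ss : seq (seq T)) :
  seq.all P (flatten ss) = seq.all (seq.all P) ss.
Proof. by elim: ss => //= s ss IH; rewrite all_cat IH. Qed.

Lemma Y_all n : seq.all (fun t => Defs.tsize t == n) (Y n).
Proof.
elim/ltn_ind: n => [[|n]] IH; first by [].
rewrite Y_succ all_flattenE all_map; apply/allP => k; rewrite mem_iota add0n ltnS => hk /=.
rewrite all_flattenE all_map.
have h1 := IH k (leq_ltn_trans hk (ltnSn n)).
have h2 := IH (n - k)%N (leq_ltn_trans (leq_subr k n) (ltnSn n)).
apply: sub_all h1 => s /eqP hs /=; rewrite all_map.
apply: sub_all h2 => t /eqP ht /=.
by rewrite hs ht subnKC.
Qed.

Lemma eq_big_all (R : nmodType) (T : Type) (P : pred T) (s : seq T) (F G : T -> R) :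
  all P s -> (forall t, P t -> F t = G t) -> \sum_(t <- s) F t = \sum_(t <- s) G t.
Proof.
move=> + h; elim: s => [|a s IH] /=; first by rewrite !big_nil.
by move=> /andP [pa ps]; rewrite !big_cons h // IH.
Qed.

Lemma tsize_Rt t : Defs.tsize (Rt t) = (Defs.tsize t).*2.
Proof. by elim: t => //= l IHl r IHr; rewrite IHl IHr add0n doubleS doubleD. Qed.
Section S.
Variables (K : fieldType) (B : algType K).

Fixpoint argsF (h1 h2 : seq B -> B) (u : tree) (s : seq B) : seq B :=
  match u with
  | Leaf => [::]
  | Node l r => cup h1 h2 l (take (Defs.tsize l) s) * nth 0 s (Defs.tsize l)
                :: argsF h1 h2 r (drop (Defs.tsize l).+1 s)
  end.

Lemma cupN (f g : seq B -> B) l r s :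
  cup f g (Node l r) s = g (argsF g f (Node l r) s).
Proof.
rewrite /=; congr (g (_ :: _)); move: (drop _ s).
by elim: r => //= l' _ r' IH s'; rewrite IH.
Qed.

Lemma IM_cons (G : seq B -> B) y r : multM (@multI K B) G (y :: r) = y * G r.
Proof.
rewrite /multM big_ord_recl big_ord_recl big1.
  by rewrite /= mul0r add0r addr0 /bump /= take0 drop0.
move=> [i hi] _ /=.
by case: r hi => [|a r] hi; rewrite /= ?mul0r //; case: i hi => [|j] hi; rewrite /= mul0r.
Qed.

Lemma IM_nil (G : seq B -> B) : multM (@multI K B) G [::] = 0.
Proof. by rewrite /multM big_ord_recl big_ord0 /= mul0r addr0. Qed.

Lemma il_r (x : seq B) : rcons (inter_l x) 1 = 1 :: inter_r x.
Proof. by elim: x => //= a x ->. Qed.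

Lemma take_r (x : seq B) k : (k <= size x)%N -> take (k.*2) (1 :: inter_r x) = inter_l (take k x).
Proof. by elim: x k => [|b x IH] [|k] //= hk; rewrite IH. Qed.

Lemma nth_r (x : seq B) k : (k <= size x)%N -> nth 0 (1 :: inter_r x) (k.*2) = 1.
Proof. by elim: x k => [|b x IH] [|k] //= hk; rewrite IH. Qed.

Lemma drop_r (x : seq B) k : drop (k.*2) (inter_r x) = inter_r (drop k x).
Proof. by elim: x k => [|b x IH] [|k] //=. Qed.

Lemma take_l (x : seq B) k : (k < size x)%N -> take (k.*2).+1 (inter_l x) = rcons (inter_l (take k x)) 1.
Proof. by elim: x k => [|b x IH] [|k] //= hk; rewrite IH. Qed.

Lemma nth_l (x : seq B) k : nth 0 (inter_l x) (k.*2).+1 = nth 0 x k.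
Proof. by elim: x k => [|b x IH] [|k] //=; rewrite nth_nil. Qed.

Lemma drop_l (x : seq B) k : drop (k.*2) (inter_l x) = inter_l (drop k x).
Proof. by elim: x k => [|b x IH] [|k] //=. Qed.

End S.
Section M.
Variables (K : fieldType) (B : algType K).

Lemma Y0 : Y 0 = [:: Leaf]. Proof. by []. Qed.

Lemma inter_r_cons (a : B) x : inter_r (a :: x) = a :: 1 :: inter_r x.
Proof. by []. Qed.

Lemma argsF_cons (h1 h2 : seq B -> B) l r s : argsF h1 h2 (Node l r) s =
  cup h1 h2 l (take (Defs.tsize l) s) * nth 0 s (Defs.tsize l) :: argsF h1 h2 r (drop (Defs.tsize l).+1 s).
Proof. by []. Qed.

Lemma B2_def (f g : seq B -> B) z :
  boxtimes2 f g z = \sum_(t <- Y (size z)) cup f g (Node Leaf (Rt t)) (rcons (inter_l z) 1).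
Proof.
case: z => [|a z]; last by [].
by rewrite Y0 big_seq1 /= mul1r.
Qed.

Lemma part1 (f g G : seq B -> B) : g = multM (@multI K B) G ->
  forall x, boxtimes f g x = multM (boxtimes1 f g) (boxtimes2 f g) x.
Proof.
move=> hg [|x1 x].
  by rewrite /boxtimes /multM big_ord_recl big_ord0 /= hg IM_nil mul0r addr0.
rewrite /boxtimes [size _]/= sumY_succ /multM [size (x1 :: x)]/= [RHS]big_ord_recl take0 [boxtimes1 f g [::]]/= mul0r add0r.
apply: eq_bigr => [[k hk]] _.
rewrite (_ : nat_of_ord (lift ord0 (Ordinal hk)) = k.+1) // take_cons drop_cons.
rewrite -[nat_of_ord (Ordinal hk)]/k.
have {}hk : (k <= size x)%N by [].
rewrite B2_def size_drop mulr_suml.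
rewrite /boxtimes1 [size (x1 :: _)]/= size_takel //.
apply: (eq_big_all (Y_all k)) => s /eqP hs.
rewrite mulr_sumr; apply: eq_bigr => t _.
rewrite il_r [Rt (Node s t)]/= (cupN f g (Node Leaf (Rt s))) (cupN f g Leaf).
rewrite inter_r_cons.
rewrite !argsF_cons [Defs.tsize (Node Leaf _)]/= [Defs.tsize Leaf]/= add0n.
rewrite tsize_Rt hs hg !IM_cons.
rewrite [take _ (x1 :: _)]/= [nth 0 (x1 :: _) _]/= [drop _ (x1 :: _)]/=.
rewrite [drop _ (1 :: _)]/=.
rewrite take_r // nth_r // !drop_r mulr1 mulrA.
by rewrite take0 drop0 [cup _ _ Leaf _]/= [nth 0 (1 :: _) 0]/= !mulr1.
Qed.
Lemma part2 (f g F : seq B -> B) : f = multM (@multI K B) F ->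
  forall x, uboxtimes g f x = multM (boxtimes2 f g) (boxtimes1 f g) x.
Proof.
move=> hf x; case hx: x => [|x1 x'].
  by rewrite /uboxtimes /multM big_ord_recl big_ord0 /= hf IM_nil mulr0 add0r.
have hn : size x = (size x').+1 by rewrite hx.
rewrite /uboxtimes -hx hn sumY_succ /multM [RHS]big_ord_recr drop_size.
rewrite [boxtimes1 f g [::]]/= mulr0 [X in _ = X]/=.
rewrite addr0 hn.
apply: eq_bigr => [[k hk]] _.
rewrite -[nat_of_ord (Ordinal hk)]/k.
have hk' : (k < size x)%N by rewrite hn.
rewrite (drop_nth 0 hk') B2_def /boxtimes1 [size (_ :: _)]/= size_takel ?(ltnW hk') //.
rewrite size_drop hn subSS mulr_suml.
apply: (eq_big_all (Y_all k)) => s /eqP hs.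
rewrite mulr_sumr; apply: eq_bigr => t _.
rewrite [Rt (Node s t)]/= (cupN g f (Node Leaf (Rt s))) (cupN g f Leaf).
rewrite !argsF_cons [Defs.tsize (Node Leaf _)]/= [Defs.tsize Leaf]/= add0n.
rewrite tsize_Rt hs hf !IM_cons.
rewrite take_l // nth_l (_ : (k.*2).+2 = k.+1.*2) // drop_l.
rewrite take0 [cup _ _ Leaf _]/= [nth 0 (_ :: _) 0]/= drop1 mul1r mulrA.
by [].
Qed.

End M.
Theorem lemma3 (K : fieldType) (B : algType K) (hK : [pchar K] =i pred0)
    (f g : seq B -> B) :
  inIMult f -> inIMult g ->
  boxtimes f g = multM (boxtimes1 f g) (boxtimes2 f g) /\
  uboxtimes g f = multM (boxtimes2 f g) (boxtimes1 f g).
Proof.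
move=> [F [_ hF]] [G [_ hG]]; split; apply: functional_extensionality => x.
  exact: (@part1 K B f g G hG x).
exact: (@part2 K B f g F hF x).
Qed.
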